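(* Let $M$ be a combinatorial $3$-manifold and $S$ a slicing of $M$ which is a weakly neighborly polyhedral map. Then $S$ is combinatorially isomorphic to one of the following: the boundary of the $3$-simplex; the boundary of the triangular prism $\Delta^1\times\Delta^2$ (6 vertices, 2 triangles, 3 quadrilaterals); or the $3\times 3$-grid torus (the quadrangulated torus with vertex set $\mathbb{Z}_3\times\mathbb{Z}_3$ and the nine quadrilaterals $\{(i,j),(i+1,j),(i+1,j+1),(i,j+1)\}$, $i,j\in\mathbb{Z}_3$).
   Context: A combinatorial $3$-manifold is a finite pure $3$-dimensional simplicial complex in which the link of every vertex is a combinatorial $2$-sphere. A function $f:M\to\mathbb{R}$ is regular simplexwise linear (rsl) if it is linear on every simplex and takes pairwise distinct values on the vertices. A slicing of $M$ is a level set $f^{-1}(x)$ of an rsl-function $f$ at a value $x$ not equal to $f(v)$ for any vertex $v$; it is a polyhedral surface whose facets are triangles and quadrilaterals, obtained by intersecting $f^{-1}(x)$ with the tetrahedra of $M$. A polyhedral map is weakly neighborly if any two of its vertices lie in a common face. *)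

(* Defs.v *)
From HB Require Import structures.
From mathcomp Require Import all_boot all_order all_algebra.
From mathcomp Require Import reals.
Set Implicit Arguments. Unset Strict Implicit. Unset Printing Implicit Defensive.
Import Order.TTheory GRing.Theory Num.Theory.

(* Polyhedral complexes of dimension 2.  A face is represented by the set  *)
(* of its edges, an edge being a 2-element set of vertices; a complex is a *)
(* finite set of faces.  This records the full face lattice.               *)
Section Complexes.
Variable W : finType.

Definition fverts (F : {set {set W}}) : {set W} := \bigcup_(e in F) e.
Definition verts (P : {set {set {set W}}}) : {set W} :=
  \bigcup_(F in P) fverts F.
Definition edges (P : {set {set {set W}}}) : {set {set W}} :=
  \bigcup_(F in P) F.

Definition connected_on (T : finType) (A : {set T}) (r : rel T) : Prop :=
  forall a b, a \in A -> b \in A ->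
    connect (fun u v => [&& u \in A, v \in A & r u v]) a b.

Definition surface (P : {set {set {set W}}}) : Prop :=
  P != set0 /\
  [/\
      (forall F, F \in P -> forall e, e \in F -> #|e| = 2),
      (forall F, F \in P ->
        [/\ 3 <= #|fverts F|,
            (forall v, v \in fverts F -> #|[set e in F | v \in e]| = 2)
          & connected_on (fverts F) (fun a b => [set a; b] \in F)]),
      (forall e, e \in edges P -> #|[set F in P | e \in F]| = 2),
      (* the link of each vertex is a single cycle: the faces around w are
         connected through edges incident with w *)
      (forall w, w \in verts P ->
        connected_on [set F in P | w \in fverts F]
          (fun F G => [exists u, [set w; u] \in F :&: G]))
    &
      connected_on (verts P) (fun a b => [set a; b] \in edges P)].

Definition polyhedral_map (P : {set {set {set W}}}) : Prop :=
  surface P /\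
  forall F G, F \in P -> G \in P -> F != G ->
    #|fverts F :&: fverts G| <= 1 \/ (fverts F :&: fverts G) \in F :&: G.

Definition weakly_neighborly (P : {set {set {set W}}}) : Prop :=
  forall u v, u \in verts P -> v \in verts P ->
    exists2 F, F \in P & (u \in fverts F) && (v \in fverts F).

Definition cycle_face (s : seq W) : {set {set W}} :=
  [set [set p.1; p.2] | p in zip s (rot 1 s)].

End Complexes.

Definition comb_iso (W W' : finType) (P : {set {set {set W}}})
    (Q : {set {set {set W'}}}) : Prop :=
  exists phi : W -> W',
    {in verts P &, injective phi} /\
    [set [set phi @: e | e : {set W} in F] | F : {set {set W}} in P] = Q.

Section Simplicial.
Variable V : finType.

Definition tri_complex (T : {set {set V}}) : {set {set {set V}}} :=
  [set [set [set a; b] | a : V in t, b : V in t & a != b] | t : {set V} in T].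

Definition comb_2sphere (T : {set {set V}}) : Prop :=
  [/\ (forall t, t \in T -> #|t| = 3),
      surface (tri_complex T)
    & (#|verts (tri_complex T)| + #|T| = #|edges (tri_complex T)| + 2)%N].

Definition vlink (K : {set {set V}}) (v : V) : {set {set V}} :=
  [set t :\ v | t : {set V} in K & v \in t].

Definition comb_3manifold (K : {set {set V}}) : Prop :=
  [/\ K != set0,
      (forall t, t \in K -> #|t| = 4)
    & forall v t, t \in K -> v \in t -> comb_2sphere (vlink K v)].

(* Slicings.  An rsl-function is determined by its (pairwise distinct)     *)
(* vertex values f : V -> R.  The level set f^-1(x) has one vertex on each *)
(* edge {u,v} of M with f u < x < f v, and one facet for each tetrahedron  *)
(* met by the level; two such vertices are joined by an edge of the        *)
(* slicing iff they lie in a common tetrahedron and the corresponding      *)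
(* edges of M share a vertex.                                              *)
Variable R : realType.

Definition rsl (f : V -> R) : Prop := injective f.

Definition crossing (f : V -> R) (x : R) (e : {set V}) : bool :=
  [exists u, exists v, (e == [set u; v]) && (f u < x < f v)%R].

Definition slice_face (f : V -> R) (x : R) (t : {set V}) : {set {set {set V}}} :=
  [set [set e1; e2] | e1 in [set: {set V}], e2 in [set: {set V}] &
     [&& crossing f x e1, crossing f x e2, e1 != e2,
         e1 \subset t, e2 \subset t & e1 :&: e2 != set0]].

Definition slicing (K : {set {set V}}) (f : V -> R) (x : R)
  : {set {set {set {set V}}}} :=
  [set slice_face f x t | t : {set V} in K & slice_face f x t != set0].

End Simplicial.

Definition o4 (n : nat) : 'I_4 := inord n.
Definition o6 (n : nat) : 'I_6 := inord n.

Definition tetra_boundary : {set {set {set 'I_4}}} :=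
  [set F in map (@cycle_face _)
    [:: [:: o4 0; o4 1; o4 2]; [:: o4 0; o4 1; o4 3];
        [:: o4 0; o4 2; o4 3]; [:: o4 1; o4 2; o4 3]]].

Definition prism_boundary : {set {set {set 'I_6}}} :=
  [set F in map (@cycle_face _)
    [:: [:: o6 0; o6 1; o6 2]; [:: o6 3; o6 4; o6 5];
        [:: o6 0; o6 1; o6 4; o6 3]; [:: o6 1; o6 2; o6 5; o6 4];
        [:: o6 2; o6 0; o6 3; o6 5]]].

Definition grid_torus : {set {set {set ('I_3 * 'I_3)}}} :=
  [set cycle_face [:: (i, j); (ordS i, j); (ordS i, ordS j); (i, ordS j)]
   | i : 'I_3, j : 'I_3].

(* Main.v *)
Require Import Defs.
From HB Require Import structures.
From mathcomp Require Import all_boot all_order all_algebra.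
From mathcomp Require Import reals.
From mathcomp Require Import zify.
From Stdlib Require Import FunctionalExtensionality.
Import Order.TTheory GRing.Theory Num.Theory.
Set Implicit Arguments. Unset Strict Implicit. Unset Printing Implicit Defensive.

Definition PF (T1 T2 W : finType) (h : T1 -> T2 -> W) (X : {set T1}) (Y : {set T2})
  : {set {set W}} :=
  [set E | [exists a1 in X, exists b1 in Y, exists a2 in X, exists b2 in Y,
     ((a1 == a2) (+) (b1 == b2)) && (E == [set h a1 b1; h a2 b2])]].

Section PFgen.
Variables (T1 T2 W : finType).
Implicit Types (h : T1 -> T2 -> W) (X : {set T1}) (Y : {set T2}).

Lemma PFP h X Y E : reflect (exists a1 b1 a2 b2, [/\ a1 \in X, b1 \in Y, a2 \in X,
   b2 \in Y & ((a1 == a2) (+) (b1 == b2)) /\ E = [set h a1 b1; h a2 b2]])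
  (E \in PF h X Y).
Proof.
rewrite inE; apply: (iffP idP).
  case/exists_inP=> a1 Ha1 /exists_inP[b1 Hb1 /exists_inP[a2 Ha2 /exists_inP[b2 Hb2]]].
  by case/andP=> Hx /eqP ->; exists a1, b1, a2, b2.
case=> a1 [b1 [a2 [b2 [Ha1 Hb1 Ha2 Hb2 [Hx ->]]]]].
apply/exists_inP; exists a1 => //; apply/exists_inP; exists b1 => //.
apply/exists_inP; exists a2 => //; apply/exists_inP; exists b2 => //.
by rewrite Hx eqxx.
Qed.

Lemma PF_mem h X Y a1 b1 a2 b2 : a1 \in X -> b1 \in Y -> a2 \in X -> b2 \in Y ->
  (a1 == a2) (+) (b1 == b2) -> [set h a1 b1; h a2 b2] \in PF h X Y.
Proof. by move=> *; apply/PFP; exists a1, b1, a2, b2. Qed.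

Lemma PF_ext h h2 X Y : {in X & Y, forall a b, h a b = h2 a b} -> PF h X Y = PF h2 X Y.
Proof.
move=> Hh; apply/setP=> E; apply/PFP/PFP.
  case=> a1 [b1 [a2 [b2 [Ha1 Hb1 Ha2 Hb2 [Hx ->]]]]].
  by exists a1, b1, a2, b2; rewrite !Hh.
case=> a1 [b1 [a2 [b2 [Ha1 Hb1 Ha2 Hb2 [Hx ->]]]]].
by exists a1, b1, a2, b2; rewrite -!Hh.
Qed.

Lemma fverts_PF h X Y e : e \in fverts (PF h X Y) ->
  exists a b, [/\ a \in X, b \in Y & e = h a b].
Proof.
case/bigcupP=> E /PFP[a1 [b1 [a2 [b2 [Ha1 Hb1 Ha2 Hb2 [_ ->]]]]]].
by rewrite !inE => /orP[] /eqP ->; [exists a1, b1 | exists a2, b2].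
Qed.

Lemma PF_fverts h X Y a b : a \in X -> b \in Y -> 3 <= #|X| + #|Y| ->
  h a b \in fverts (PF h X Y).
Proof.
move=> Ha Hb Hc.
have : (1 < #|X|) || (1 < #|Y|) by lia.
case/orP=> /card_gt1P [c [d [Hc' Hd Hcd]]].
  have [a' Ha' Hna] : exists2 a', a' \in X & a' != a.
    by case: (eqVneq c a) => [Eca|]; [exists d => //; rewrite -Eca eq_sym | exists c].
  apply/bigcupP; exists [set h a b; h a' b]; last by rewrite !inE eqxx.
  by apply: PF_mem => //; rewrite eqxx eq_sym (negbTE Hna).
have [b' Hb' Hnb] : exists2 b', b' \in Y & b' != b.
  by case: (eqVneq c b) => [Ecb|]; [exists d => //; rewrite -Ecb eq_sym | exists c].
apply/bigcupP; exists [set h a b; h a b']; last by rewrite !inE eqxx.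
by apply: PF_mem => //; rewrite eqxx eq_sym (negbTE Hnb).
Qed.

Lemma PF_neq0 h X Y : PF h X Y != set0 ->
  [/\ X != set0, Y != set0 & 3 <= #|X| + #|Y|].
Proof.
case/set0Pn=> E /PFP[a1 [b1 [a2 [b2 [Ha1 Hb1 Ha2 Hb2 [Hx _]]]]]].
split; [by apply/set0Pn; exists a1 | by apply/set0Pn; exists b1 |].
have H1 : 0 < #|X| by apply/card_gt0P; exists a1.
have H1' : 0 < #|Y| by apply/card_gt0P; exists b1.
case: (eqVneq a1 a2) => [Eq|Hne].
  subst a2; rewrite eqxx /= in Hx.
  have H2 : 1 < #|Y| by apply/card_gt1P; exists b1, b2.
  lia.
have H2 : 1 < #|X| by apply/card_gt1P; exists a1, a2.
lia.
Qed.

End PFgen.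

Lemma PF_image (T1 T2 W W' : finType) (phi : W -> W') (h : T1 -> T2 -> W) X Y :
  [set phi @: e | e : {set W} in PF h X Y] = PF (fun a b => phi (h a b)) X Y.
Proof.
apply/setP=> E; apply/idP/idP.
  case/imsetP=> e /PFP[a1 [b1 [a2 [b2 [Ha1 Hb1 Ha2 Hb2 [Hx ->]]]]]] ->.
  by apply/PFP; exists a1, b1, a2, b2; rewrite imsetU1 imset_set1.
case/PFP=> a1 [b1 [a2 [b2 [Ha1 Hb1 Ha2 Hb2 [Hx ->]]]]].
apply/imsetP; exists [set h a1 b1; h a2 b2]; first exact: PF_mem.
by rewrite imsetU1 imset_set1.
Qed.


Lemma PF_sym (T1 T2 W : finType) (h : T1 -> T2 -> W) X Y : PF h X Y = PF (fun b a => h a b) Y X.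
Proof.
apply/setP=> E; apply/PFP/PFP; case=> a1 [b1 [a2 [b2 [Ha1 Hb1 Ha2 Hb2 [Hx ->]]]]];
  by exists b1, a1, b2, a2; rewrite addbC.
Qed.

Lemma PF_reindex (T1 T2 U1 U2 W : finType) (h : U1 -> U2 -> W) (g1 : T1 -> U1)
   (g2 : T2 -> U2) (X : {set T1}) (Y : {set T2}) : {in X &, injective g1} -> {in Y &, injective g2} ->
  PF (fun a b => h (g1 a) (g2 b)) X Y = PF h (g1 @: X) (g2 @: Y).
Proof.
move=> i1 i2; apply/setP=> E; apply/PFP/PFP.
  case=> a1 [b1 [a2 [b2 [Ha1 Hb1 Ha2 Hb2 [Hx ->]]]]].
  exists (g1 a1), (g2 b1), (g1 a2), (g2 b2); rewrite !imset_f //; split=> //.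
  by rewrite (inj_in_eq i1) // (inj_in_eq i2).
case=> a1 [b1 [a2 [b2 [/imsetP[c1 Hc1 ->] /imsetP[d1 Hd1 ->]
  /imsetP[c2 Hc2 ->] /imsetP[d2 Hd2 ->] [Hx ->]]]]].
exists c1, d1, c2, d2; split=> //.
by rewrite -(inj_in_eq i1) // -(inj_in_eq i2).
Qed.

Ltac orcase := let H := fresh "H" in move=> H; repeat (case/orP: H => H); move/eqP: H => ->.

Lemma set2C' (T : finType) (a b : T) : [set a; b] = [set b; a].
Proof. by apply/setP=> z; rewrite !inE orbC. Qed.

Lemma cycle3 (W : finType) (a b c : W) :
  cycle_face [:: a; b; c] = [set [set a; b]; [set b; c]; [set c; a]].
Proof.
rewrite /cycle_face /=; apply/setP=> E; apply/imsetP/idP.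
  by case=> p; rewrite !inE; orcase; move=> ->; rewrite eqxx ?orbT.
rewrite !inE; orcase.
- by exists (a, b); rewrite ?inE ?eqxx.
- by exists (b, c); rewrite ?inE ?eqxx ?orbT.
- by exists (c, a); rewrite ?inE ?eqxx ?orbT.
Qed.

Lemma cycle4 (W : finType) (a b c d : W) :
  cycle_face [:: a; b; c; d] = [set [set a; b]; [set b; c]; [set c; d]; [set d; a]].
Proof.
rewrite /cycle_face /=; apply/setP=> E; apply/imsetP/idP.
  by case=> p; rewrite !inE; orcase; move=> ->; rewrite eqxx ?orbT.
rewrite !inE; orcase.
- by exists (a, b); rewrite ?inE ?eqxx.
- by exists (b, c); rewrite ?inE ?eqxx ?orbT.
- by exists (c, d); rewrite ?inE ?eqxx ?orbT.
- by exists (d, a); rewrite ?inE ?eqxx ?orbT.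
Qed.

Lemma cycle4_rev (W : finType) (a b c d : W) :
  cycle_face [:: a; b; c; d] = cycle_face [:: a; d; c; b].
Proof.
rewrite !cycle4; apply/setP=> E; rewrite !inE.
rewrite (set2C' d c) (set2C' c b) (set2C' b a) (set2C' a d).
by do 4 (case: (E == _); rewrite ?orbT //=).
Qed.

Ltac solve_mem := rewrite ?inE; first [ by rewrite ?eqxx ?orbT ?orTb | by rewrite set2C' ?eqxx ?orbT ?orTb ].

Lemma PF_tri (T1 T2 W : finType) (h : T1 -> T2 -> W) a b1 b2 b3 :
  b1 != b2 -> b2 != b3 -> b1 != b3 ->
  PF h [set a] [set b1; b2; b3] = cycle_face [:: h a b1; h a b2; h a b3].
Proof.
move=> n12 n23 n13; rewrite cycle3; apply/setP=> E; apply/PFP/idP.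
  case=> a1 [c1 [a2 [c2 [Ha1 Hc1 Ha2 Hc2 [Hx ->]]]]].
  move: Ha1 Ha2 Hc1 Hc2 Hx; rewrite !inE => /eqP -> /eqP ->.
  orcase; orcase; rewrite ?eqxx //= ?(negbTE n12) ?(negbTE n23)
    ?(negbTE n13) ?(eq_sym b2 b1) ?(eq_sym b3 b2) ?(eq_sym b3 b1) ?(negbTE n12)
    ?(negbTE n23) ?(negbTE n13) //= => _; solve_mem.
rewrite !inE; orcase.
- by exists a, b1, a, b2; repeat split; rewrite ?inE ?eqxx ?orbT ?orTb ?(negbTE n12).
- by exists a, b2, a, b3; repeat split; rewrite ?inE ?eqxx ?orbT ?orTb ?(negbTE n23).
- by exists a, b3, a, b1; repeat split; rewrite ?inE ?eqxx ?orbT ?orTb ?(eq_sym b3 b1) ?(negbTE n13).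
Qed.

Lemma PF_quad (T1 T2 W : finType) (h : T1 -> T2 -> W) a1 a2 b1 b2 :
  a1 != a2 -> b1 != b2 ->
  PF h [set a1; a2] [set b1; b2] = cycle_face [:: h a1 b1; h a1 b2; h a2 b2; h a2 b1].
Proof.
move=> na nb; rewrite cycle4; apply/setP=> E; apply/PFP/idP.
  case=> c1 [d1 [c2 [d2 [Hc1 Hd1 Hc2 Hd2 [Hx ->]]]]].
  move: Hc1 Hc2 Hd1 Hd2 Hx; rewrite !inE.
  orcase; orcase; orcase; orcase;
    rewrite ?eqxx //= ?(negbTE na) ?(negbTE nb) ?(eq_sym a2 a1) ?(eq_sym b2 b1)
    ?(negbTE na) ?(negbTE nb) //= => _; solve_mem.
rewrite !inE; orcase.
- by exists a1, b1, a1, b2; repeat split; rewrite ?inE ?eqxx ?orbT ?orTb ?(negbTE nb).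
- by exists a1, b2, a2, b2; repeat split; rewrite ?inE ?eqxx ?orbT ?orTb ?(negbTE na).
- by exists a2, b2, a2, b1; repeat split; rewrite ?inE ?eqxx ?orbT ?orTb ?(eq_sym b2 b1) ?(negbTE nb).
- by exists a2, b1, a1, b1; repeat split; rewrite ?inE ?eqxx ?orbT ?orTb ?(eq_sym a2 a1) ?(negbTE na).
Qed.

Lemma double_count (W : finType) (P : {set {set {set W}}}) :
  \sum_(F in P) #|F| = \sum_(e in edges P) #|[set F in P | e \in F]|.
Proof.
under eq_bigr => F _ do rewrite -sum1_card.
rewrite (exchange_big_dep (fun e => e \in edges P)) /=; last first.
  by move=> F e FP eF; apply/bigcupP; exists F.
by apply: eq_bigr => e _; rewrite sum1dep_card.
Qed.

Definition tf (V : finType) (t : {set V}) : {set {set V}} :=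
  [set [set a; b] | a : V in t, b : V in t & a != b].

Lemma tri_complexE (V : finType) (T : {set {set V}}) : tri_complex T = [set tf t | t in T].
Proof. by []. Qed.

Lemma tf_draws (V : finType) (t : {set V}) : tf t = [set e : {set V} | e \subset t & #|e| == 2].
Proof.
apply/setP=> e; rewrite inE; apply/imset2P/idP.
  case=> a b Ha; rewrite inE => /andP[Hb nab] ->.
  rewrite cards2 nab andbT.
  by apply/subsetP=> w /set2P[] ->.
case/andP=> se /cards2P[a [b [nab Ee]]].
have Ha : a \in t by apply: (subsetP se); rewrite Ee !inE eqxx.
have Hb : b \in t by apply: (subsetP se); rewrite Ee !inE eqxx orbT.
by exists a b => //; rewrite inE Hb.
Qed.

Lemma tf_card (V : finType) (t : {set V}) : #|t| = 3 -> #|tf t| = 3.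
Proof. by move=> H; rewrite tf_draws cards_draws H. Qed.

Lemma tf_fverts (V : finType) (t : {set V}) : 2 <= #|t| -> fverts (tf t) = t.
Proof.
move=> H; apply/setP=> a; apply/bigcupP/idP.
  case=> e; rewrite tf_draws inE => /andP[se _] ae.
  exact: (subsetP se).
move=> Ha.
have [b Hb nba] : exists2 b, b \in t & b != a.
  case/card_gt1P: H => c [d [Hc Hd ncd]].
  by case: (eqVneq c a) => [Eca|]; [exists d => //; rewrite -Eca eq_sym | exists c].
exists [set a; b]; last by rewrite !inE eqxx.
rewrite tf_draws inE cards2 (eq_sym a b) nba andbT.
by apply/subsetP=> w /set2P[] ->.
Qed.

Definition pe (V : finType) (u v : V) : {set V} := [set u; v].

Lemma set2_eq (T : finType) (a b c d : T) : [set a; b] = [set c; d] ->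
  (a = c /\ b = d) \/ (a = d /\ b = c).
Proof.
move=> E.
have Ha : a \in [set c; d] by rewrite -E !inE eqxx.
have Hb : b \in [set c; d] by rewrite -E !inE eqxx orbT.
have Hc : c \in [set a; b] by rewrite E !inE eqxx.
have Hd : d \in [set a; b] by rewrite E !inE eqxx orbT.
move: Ha Hb Hc Hd; rewrite !inE.
case/orP=> /eqP Ha; case/orP=> /eqP Hb; case/orP=> /eqP Hc; case/orP=> /eqP Hd;
  subst; by [left | right].
Qed.

Lemma sub_card_eq (T : finType) (X B : {set T}) : X \subset B -> #|B| <= #|X| -> X = B.
Proof. by move=> s c; apply/eqP; rewrite eqEcard s c. Qed.

Definition gI (V : finType) (p : nat) (Z : {set V}) (w : V) : 'I_p.+1 :=
  inord (index w (enum Z)).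

Lemma gI_val (V : finType) p (Z : {set V}) w : #|Z| = p.+1 -> w \in Z ->
  nat_of_ord (gI p Z w) = index w (enum Z).
Proof.
by move=> cZ wZ; rewrite /gI inordK // -cZ cardE index_mem mem_enum.
Qed.

Lemma gI_inj (V : finType) p (Z : {set V}) : #|Z| = p.+1 -> {in Z &, injective (gI p Z)}.
Proof.
move=> cZ a b Ha Hb E.
have := congr1 (@nat_of_ord _) E; rewrite !gI_val // => Ei.
by rewrite -(nth_index a (_ : a \in enum Z)) ?mem_enum // Ei nth_index ?mem_enum.
Qed.

Lemma gI_surj (V : finType) p (Z : {set V}) : #|Z| = p.+1 ->
  forall k : 'I_p.+1, exists2 w, w \in Z & gI p Z w = k.
Proof.
move=> cZ k.
have [w0 _] : exists w0, w0 \in Z by apply/set0Pn; rewrite -card_gt0 cZ.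
have ks : k < size (enum Z) by rewrite -cardE cZ ltn_ord.
exists (nth w0 (enum Z) k); first by rewrite -mem_enum mem_nth.
apply: val_inj; rewrite /= gI_val ?index_uniq ?enum_uniq //.
by rewrite -mem_enum mem_nth.
Qed.

Lemma gI_img (V : finType) p (Z : {set V}) (X' : {set 'I_p.+1}) : #|Z| = p.+1 ->
  gI p Z @: [set w in Z | gI p Z w \in X'] = X'.
Proof.
move=> cZ; apply/setP=> k; apply/imsetP/idP.
  by case=> w; rewrite inE => /andP[_ H] ->.
move=> Hk; case: (gI_surj cZ k) => w wZ Ew.
by exists w; rewrite // inE wZ Ew.
Qed.

Section Slice.
Variables (R : realType) (V : finType) (K : {set {set V}}) (f : V -> R) (x : R).
Hypothesis Hx : forall v, f v != x.

Local Notation S := (slicing K f x).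
Local Notation lo u := (f u < x)%R.
Local Notation hi u := (x < f u)%R.

Lemma lohi v : lo v || hi v.
Proof. by rewrite lt_total // Hx. Qed.

Lemma lohiF v : lo v -> hi v -> False.
Proof. by move=> a b; have := lt_trans a b; rewrite ltxx. Qed.

Lemma lohi_neq u v : lo u -> hi v -> u != v.
Proof. by move=> a b; apply/eqP=> E; subst v; exact: lohiF a b. Qed.

Lemma pe_inj u v u' v' : lo u -> hi v -> lo u' -> hi v' ->
  pe u v = pe u' v' -> u = u' /\ v = v'.
Proof.
move=> lu hv lu' hv' E.
have Hu : u \in pe u' v' by rewrite -E !inE eqxx.
have Hv : v \in pe u' v' by rewrite -E !inE eqxx orbT.
move: Hu Hv; rewrite !inE => /orP[] /eqP Hu /orP[] /eqP Hv //.
- by subst v; case: (lohiF lu' hv).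
- by subst u; case: (lohiF lu hv').
- by subst u; case: (lohiF lu hv').
Qed.

Lemma crossP e : reflect (exists u v, [/\ e = pe u v, lo u & hi v]) (crossing f x e).
Proof.
apply: (iffP existsP).
  by case=> u /existsP[v /andP[/eqP -> /andP[a b]]]; exists u, v.
by case=> u [v [-> a b]]; exists u; apply/existsP; exists v; rewrite eqxx a b.
Qed.

Definition tl (t : {set V}) := [set w in t | lo w].
Definition th (t : {set V}) := [set w in t | hi w].

Lemma SF_PF t : slice_face f x t = PF (@pe V) (tl t) (th t).
Proof.
apply/setP=> E; apply/imset2P/PFP.
  case=> e1 e2 _; rewrite !inE /= => /andP[/crossP[u1 [v1 [-> l1 h1]]]
    /and5P[/crossP[u2 [v2 [-> l2 h2]]] Hne s1 s2 Hi]] ->.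
  have Hs : forall a b, [set a; b] \subset t -> (a \in t) && (b \in t).
    by move=> a b /subsetP H; rewrite !H // !inE eqxx ?orbT.
  case/andP: (Hs _ _ s1) => t1 t1'; case/andP: (Hs _ _ s2) => t2 t2'.
  exists u1, v1, u2, v2; split; rewrite ?inE ?t1 ?t1' ?t2 ?t2' ?l1 ?l2 ?h1 ?h2 //.
  split=> //.
  case: (eqVneq u1 u2) Hne Hi => [<-|nu]; case: (eqVneq v1 v2) => [<-|nv] //=.
    by rewrite eqxx.
  move=> _; case/set0Pn=> w; rewrite !inE => /andP[/orP[] /eqP -> /orP[] /eqP Hw].
  - by rewrite Hw eqxx in nu.
  - by subst u1; case: (lohiF l1 h2).
  - by subst v1; case: (lohiF l2 h1).
  - by rewrite Hw eqxx in nv.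
case=> a1 [b1 [a2 [b2 [Ha1 Hb1 Ha2 Hb2 [Hxr ->]]]]].
move: Ha1 Hb1 Ha2 Hb2; rewrite !inE => /andP[t1 l1] /andP[t1' h1] /andP[t2 l2] /andP[t2' h2].
exists (pe a1 b1) (pe a2 b2) => //.
rewrite !inE /=; apply/andP; split; first by apply/crossP; exists a1, b1.
apply/and5P; split.
- by apply/crossP; exists a2, b2.
- apply: contraTneq Hxr => /(pe_inj l1 h1 l2 h2) [-> ->]; by rewrite !eqxx.
- by apply/subsetP=> w /set2P[] ->.
- by apply/subsetP=> w /set2P[] ->.
- apply/set0Pn; case: (eqVneq a1 a2) Hxr => [<- _|_ /= /eqP <-].
    by exists a1; rewrite !inE eqxx.
  by exists b1; rewrite !inE eqxx !orbT.
Qed.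


Hypothesis HK : comb_3manifold K.
Hypothesis Hpm : polyhedral_map S.
Hypothesis Hwn : weakly_neighborly S.
Implicit Types (X Y : {set V}).

Definition Bs := [set u | [exists v, [&& pe u v \in verts S, lo u & hi v]]].
Definition As := [set v | [exists u, [&& pe u v \in verts S, lo u & hi v]]].

Lemma Bs_lo u : u \in Bs -> lo u.
Proof. by rewrite inE => /existsP[v /and3P[]]. Qed.
Lemma As_hi v : v \in As -> hi v.
Proof. by rewrite inE => /existsP[u /and3P[]]. Qed.

Lemma hi_nlo w : hi w = ~~ lo w.
Proof.
case/orP: (lohi w) => H; rewrite H /=.
  by apply/negP=> h; exact: lohiF H h.
by apply/esym/negP=> l; exact: lohiF l H.
Qed.

Lemma card_tlth t : #|tl t| + #|th t| = #|t|.
Proof.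
rewrite -(cardsID [set w | lo w] t); congr (_ + _); apply: eq_card => w;
  by rewrite !inE ?hi_nlo andbC.
Qed.

Lemma S_faceP F : F \in S -> exists t, [/\ t \in K, F = PF (@pe V) (tl t) (th t),
  F != set0 & #|tl t| + #|th t| = 4].
Proof.
case/imsetP=> t; rewrite inE => /andP[tK Hne] ->.
case: HK => _ H4 _.
by exists t; rewrite -SF_PF card_tlth H4.
Qed.

Lemma faces_neq0 F : F \in S -> F != set0.
Proof. by case/S_faceP=> t []. Qed.

Lemma memPF_fv X Y u v : {subset X <= [pred a | lo a]} -> {subset Y <= [pred b | hi b]} ->
  lo u -> hi v -> pe u v \in fverts (PF (@pe V) X Y) -> u \in X /\ v \in Y.
Proof.
move=> HX HY lu hv /fverts_PF[a [b [Ha Hb /(pe_inj lu hv (HX _ Ha) (HY _ Hb))[-> ->]]]].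
by [].
Qed.

Lemma tlP t a : a \in tl t -> lo a.
Proof. by rewrite !inE => /andP[]. Qed.
Lemma thP t a : a \in th t -> hi a.
Proof. by rewrite !inE => /andP[]. Qed.

Lemma tl_lo t : {subset tl t <= [pred a | lo a]}.
Proof. by move=> a; rewrite !inE => /andP[]. Qed.
Lemma th_hi t : {subset th t <= [pred a | hi a]}.
Proof. by move=> a; rewrite !inE => /andP[]. Qed.
Lemma Bs_lo' : {subset Bs <= [pred a | lo a]}.
Proof. by move=> a /Bs_lo. Qed.
Lemma As_hi' : {subset As <= [pred a | hi a]}.
Proof. by move=> a /As_hi. Qed.

Lemma verts_SP e : e \in verts S -> exists u v, [/\ e = pe u v, u \in Bs & v \in As].
Proof.
move=> He; case/bigcupP: (He) => F /S_faceP[t [tK -> _ _]].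
case/fverts_PF=> a [b [Ha Hb Ee]]; exists a, b; split => //.
  rewrite inE; apply/existsP; exists b; rewrite -Ee He.
  by rewrite (tlP Ha) (thP Hb).
rewrite inE; apply/existsP; exists a; rewrite -Ee He.
by rewrite (tlP Ha) (thP Hb).
Qed.

Lemma S_shape F : F \in S -> exists X Y, [/\ F = PF (@pe V) X Y, X \subset Bs, Y \subset As,
  X != set0 & (Y != set0) /\ #|X| + #|Y| = 4].
Proof.
move=> FS; have := S_faceP FS => -[t [tK EF Fn C4]].
have Hn : PF (@pe V) (tl t) (th t) != set0 by rewrite -EF.
have [Xn Yn _] := PF_neq0 Hn.
exists (tl t), (th t); split => //.
- apply/subsetP=> u Hu; case/set0Pn: Yn => v Hv.
  have Hf : pe u v \in verts S.
    by apply/bigcupP; exists F => //; rewrite EF; apply: PF_fverts => //; rewrite C4.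
  by rewrite inE; apply/existsP; exists v; rewrite Hf (tlP Hu) (thP Hv).
- apply/subsetP=> v Hv; case/set0Pn: Xn => u Hu.
  have Hf : pe u v \in verts S.
    by apply/bigcupP; exists F => //; rewrite EF; apply: PF_fverts => //; rewrite C4.
  by rewrite inE; apply/existsP; exists u; rewrite Hf (tlP Hu) (thP Hv).
Qed.

Lemma PF_sub X Y X' Y' : {subset X <= [pred a | lo a]} -> {subset Y <= [pred b | hi b]} ->
  {subset X' <= [pred a | lo a]} -> {subset Y' <= [pred b | hi b]} ->
  X != set0 -> Y != set0 -> 3 <= #|X| + #|Y| ->
  PF (@pe V) X Y = PF (@pe V) X' Y' -> X \subset X' /\ Y \subset Y'.
Proof.
move=> hX hY hX' hY' Xn Yn C E; split; apply/subsetP.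
  move=> u Hu; case/set0Pn: Yn => v Hv.
  have := PF_fverts (@pe V) Hu Hv C; rewrite E => /memPF_fv.
  by case/(_ hX' hY' (hX _ Hu) (hY _ Hv)).
move=> v Hv; case/set0Pn: Xn => u Hu.
have := PF_fverts (@pe V) Hu Hv C; rewrite E => /memPF_fv.
by case/(_ hX' hY' (hX _ Hu) (hY _ Hv)).
Qed.

Lemma PF_inj X Y X' Y' : {subset X <= [pred a | lo a]} -> {subset Y <= [pred b | hi b]} ->
  {subset X' <= [pred a | lo a]} -> {subset Y' <= [pred b | hi b]} ->
  X != set0 -> Y != set0 -> 3 <= #|X| + #|Y| ->
  X' != set0 -> Y' != set0 -> 3 <= #|X'| + #|Y'| ->
  PF (@pe V) X Y = PF (@pe V) X' Y' -> X = X' /\ Y = Y'.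
Proof.
move=> hX hY hX' hY' Xn Yn C Xn' Yn' C' E.
have [s1 s2] := PF_sub hX hY hX' hY' Xn Yn C E.
have [s3 s4] := PF_sub hX' hY' hX hY Xn' Yn' C' (esym E).
by split; apply/eqP; rewrite eqEsubset ?s1 ?s2 ?s3 ?s4.
Qed.

Lemma sub_lo X : X \subset Bs -> {subset X <= [pred a | lo a]}.
Proof. by move/subsetP=> H a /H /Bs_lo. Qed.
Lemma sub_hi Y : Y \subset As -> {subset Y <= [pred a | hi a]}.
Proof. by move/subsetP=> H a /H /As_hi. Qed.

Lemma shape_of X Y : X \subset Bs -> Y \subset As -> PF (@pe V) X Y \in S ->
  [/\ X != set0, Y != set0 & #|X| + #|Y| = 4].
Proof.
move=> sX sY FS; have [X0 [Y0 [E sX0 sY0 Xn0 [Yn0 C0]]]] := S_shape FS.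
have [Xn Yn C] := PF_neq0 (faces_neq0 FS).
have C0' : 3 <= #|X0| + #|Y0| by rewrite C0.
have [-> ->] := PF_inj (sub_lo sX) (sub_hi sY) (sub_lo sX0) (sub_hi sY0) Xn Yn C Xn0 Yn0 C0' E.
by [].
Qed.


Lemma S_neq0 : S != set0.
Proof. by case: Hpm => [[]]. Qed.

Lemma two_faces E : E \in edges S -> #|[set F in S | E \in F]| = 2.
Proof. by case: Hpm => [[_ [_ _ H _ _]] _]; exact: H. Qed.

Lemma complete u v : u \in Bs -> v \in As -> pe u v \in verts S.
Proof.
move=> Bu Av; move: (Bu) (Av); rewrite !inE.
case/existsP=> v' /and3P[H1 lu hv'] /existsP[u' /and3P[H2 lu' hv]].
case: (Hwn H1 H2) => F FS /andP[F1 F2].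
case: (S_faceP FS) => t [tK EF _ C4].
rewrite EF in F1 F2.
case: (memPF_fv (@tl_lo t) (@th_hi t) lu hv' F1) => ut _.
case: (memPF_fv (@tl_lo t) (@th_hi t) lu' hv F2) => _ vt.
by apply/bigcupP; exists F => //; rewrite EF; apply: PF_fverts => //; rewrite C4.
Qed.

Lemma WN4 u1 u2 v1 v2 : u1 \in Bs -> u2 \in Bs -> v1 \in As -> v2 \in As ->
  exists X Y, [/\ PF (@pe V) X Y \in S, X \subset Bs, Y \subset As, #|X| + #|Y| = 4 &
     [/\ u1 \in X, u2 \in X, v1 \in Y & v2 \in Y]].
Proof.
move=> B1 B2 A1 A2.
case: (Hwn (complete B1 A1) (complete B2 A2)) => F FS /andP[F1 F2].
case: (S_shape FS) => X [Y [EF sX sY Xn [Yn C]]].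
rewrite EF in FS F1 F2.
case: (memPF_fv (sub_lo sX) (sub_hi sY) (Bs_lo B1) (As_hi A1) F1) => ? ?.
case: (memPF_fv (sub_lo sX) (sub_hi sY) (Bs_lo B2) (As_hi A2) F2) => ? ?.
by exists X, Y.
Qed.

Lemma quad u1 u2 v1 v2 : u1 \in Bs -> u2 \in Bs -> v1 \in As -> v2 \in As ->
  u1 != u2 -> v1 != v2 -> PF (@pe V) [set u1; u2] [set v1; v2] \in S.
Proof.
move=> B1 B2 A1 A2 nu nv.
case: (WN4 B1 B2 A1 A2) => X [Y [FS sX sY C [x1 x2 y1 y2]]].
have sx : [set u1; u2] \subset X by apply/subsetP=> w /set2P[] ->.
have sy : [set v1; v2] \subset Y by apply/subsetP=> w /set2P[] ->.
have cx := subset_leq_card sx; have cy := subset_leq_card sy.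
rewrite !cards2 nu nv /= in cx cy.
rewrite (@sub_card_eq _ _ X sx); last by rewrite cards2 nu; clear -C cy; lia.
by rewrite (@sub_card_eq _ _ Y sy) //; rewrite cards2 nv; clear -C cx; lia.
Qed.

Lemma Bedge_in u v1 v2 X Y : lo u -> hi v1 -> hi v2 -> v1 != v2 ->
  X \subset Bs -> Y \subset As ->
  ([set pe u v1; pe u v2] \in PF (@pe V) X Y) = [&& u \in X, v1 \in Y & v2 \in Y].
Proof.
move=> lu h1 h2 nv sX sY; apply/idP/idP.
  case/PFP=> a1 [b1 [a2 [b2 [Ha1 Hb1 Ha2 Hb2 [_ Heq]]]]].
  have la1 := sub_lo sX Ha1; have la2 := sub_lo sX Ha2.
  have hb1 := sub_hi sY Hb1; have hb2 := sub_hi sY Hb2.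
  case: (set2_eq Heq) => [[E1 E2]|[E1 E2]].
    case: (pe_inj lu h1 la1 hb1 E1) => -> ->; case: (pe_inj lu h2 la2 hb2 E2) => _ ->.
    by rewrite Ha1 Hb1 Hb2.
  case: (pe_inj lu h1 la2 hb2 E1) => -> ->; case: (pe_inj lu h2 la1 hb1 E2) => _ ->.
  by rewrite Ha2 Hb1 Hb2.
case/and3P=> Hu H1 H2; apply: PF_mem => //.
by rewrite eqxx (negbTE nv).
Qed.

Section Bedge.
Variables (u v1 v2 : V).
Hypotheses (Bu : u \in Bs) (A1 : v1 \in As) (A2 : v2 \in As) (nv : v1 != v2).
Local Notation E := [set pe u v1; pe u v2].
Local Notation Qf := (fun u' => PF (@pe V) [set u; u'] [set v1; v2]).
Local Notation Qm := [set Qf u' | u' in Bs :\ u].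

Lemma Q_facts u' : u' \in Bs :\ u -> [/\ Qf u' \in S, E \in Qf u',
  [set u; u'] \subset Bs, [set v1; v2] \subset As & u' != u].
Proof.
move=> /setD1P[nu Bu'].
have sx : [set u; u'] \subset Bs by apply/subsetP=> w /set2P[] ->.
have sy : [set v1; v2] \subset As by apply/subsetP=> w /set2P[] ->.
split => //; first by apply: quad => //; rewrite eq_sym.
by rewrite Bedge_in ?(Bs_lo Bu) ?(As_hi A1) ?(As_hi A2) // !inE !eqxx ?orbT.
Qed.

Lemma Qm_card : #|Qm| = #|Bs :\ u|.
Proof.
apply: card_in_imset => a b Ha Hb E'.
case: (Q_facts Ha) => _ _ sa sy na; case: (Q_facts Hb) => _ _ sb _ nb.
have n2 : forall w, w != u -> [set u; w] != set0 by move=> w _; apply/set0Pn; exists u; rewrite !inE eqxx.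
have ny : [set v1; v2] != set0 by apply/set0Pn; exists v1; rewrite !inE eqxx.
have c2 : forall w, w != u -> 3 <= #|[set u; w]| + #|[set v1; v2]|.
  by move=> w nw; rewrite !cards2 eq_sym nw nv.
case: (PF_inj (sub_lo sa) (sub_hi sy) (sub_lo sb) (sub_hi sy) (n2 _ na) ny (c2 _ na)
  (n2 _ nb) ny (c2 _ nb) E') => Hs _.
have : a \in [set u; b] by rewrite -Hs !inE eqxx orbT.
by rewrite !inE (negbTE na) /= => /eqP.
Qed.

Lemma Qm_sub : Qm \subset [set F in S | E \in F].
Proof.
apply/subsetP=> F /imsetP[u' Hu' ->]; case: (Q_facts Hu') => H1 H2 _ _ _.
by rewrite inE H1 H2.
Qed.

Lemma Bedge_le2 : #|Bs :\ u| <= 2.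
Proof.
case: (set_0Vmem (Bs :\ u)) => [->|[u' Hu']]; first by rewrite cards0.
case: (Q_facts Hu') => H1 H2 _ _ _.
have Ee : E \in edges S by apply/bigcupP; exists (Qf u').
by rewrite -Qm_card -(two_faces Ee); apply: subset_leq_card Qm_sub.
Qed.

Lemma Bedge_tri Y : Y \subset As -> PF (@pe V) [set u] Y \in S -> v1 \in Y -> v2 \in Y ->
  #|Bs :\ u| <= 1.
Proof.
move=> sY TS y1 y2.
have sx : [set u] \subset Bs by rewrite sub1set.
have ET : E \in PF (@pe V) [set u] Y.
  by rewrite Bedge_in ?(Bs_lo Bu) ?(As_hi A1) ?(As_hi A2) // !inE eqxx y1 y2.
have Ee : E \in edges S by apply/bigcupP; exists (PF (@pe V) [set u] Y).
have [_ Yn C] := shape_of sx sY TS.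
have nT : PF (@pe V) [set u] Y \notin Qm.
  apply/negP=> /imsetP[u' Hu' Eq].
  case: (Q_facts Hu') => _ _ sa sy na.
  have n1 : [set u] != set0 by apply/set0Pn; exists u; rewrite !inE.
  have n2 : [set u; u'] != set0 by apply/set0Pn; exists u; rewrite !inE eqxx.
  have ny : [set v1; v2] != set0 by apply/set0Pn; exists v1; rewrite !inE eqxx.
  have c2 : 3 <= #|[set u; u']| + #|[set v1; v2]| by rewrite !cards2 eq_sym na nv.
  have C3 : 3 <= #|[set u]| + #|Y| by rewrite C.
  case: (PF_inj (sub_lo sx) (sub_hi sY) (sub_lo sa) (sub_hi sy) n1 Yn C3
    n2 ny c2 Eq) => Hs _.
  have : u' \in [set u] by rewrite Hs !inE eqxx orbT.
  by rewrite inE (negbTE na).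
have := subset_leq_card (_ : PF (@pe V) [set u] Y |: Qm \subset [set F in S | E \in F]).
rewrite cardsU1 nT Qm_card two_faces //= => H; apply: H.
by rewrite subUset sub1set inE TS ET Qm_sub.
Qed.

End Bedge.

Lemma mn5 : 5 <= #|Bs| + #|As|.
Proof.
case/set0Pn: S_neq0 => F FS.
case: (S_shape FS) => X [Y [EF sX sY Xn [Yn C]]].
have cX := subset_leq_card sX; have cY := subset_leq_card sY.
rewrite leqNgt; apply/negP => Hlt.
have allF : forall G, G \in S -> G = F.
  move=> G GS; case: (S_shape GS) => X' [Y' [EG sX' sY' _ [_ C']]].
  have cX' := subset_leq_card sX'; have cY' := subset_leq_card sY'.
  have e1 : #|Bs| <= #|X| by clear -C cX cY Hlt; lia.
  have e2 : #|As| <= #|Y| by clear -C cX cY Hlt; lia.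
  have e3 : #|Bs| <= #|X'| by clear -C' cX' cY' Hlt; lia.
  have e4 : #|As| <= #|Y'| by clear -C' cX' cY' Hlt; lia.
  by rewrite EG EF (sub_card_eq sX e1) (sub_card_eq sY e2) (sub_card_eq sX' e3)
    (sub_card_eq sY' e4).
case/set0Pn: (faces_neq0 FS) => E EF'.
have Ee : E \in edges S by apply/bigcupP; exists F.
have := two_faces Ee.
have : [set G in S | E \in G] \subset [set F].
  by apply/subsetP=> G; rewrite inE => /andP[/allF -> _]; rewrite inE.
by move/subset_leq_card; rewrite cards1 => H1 H2; rewrite H2 in H1.
Qed.

Lemma card_t t : t \in K -> #|t| = 4.
Proof. by case: HK => _ H _; apply: H. Qed.


Lemma tK_vert t a b : t \in K -> a \in t -> b \in t -> lo a -> hi b -> pe a b \in verts S.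
Proof.
move=> tK at1 bt la hb.
have Ha : a \in tl t by rewrite inE at1 la.
have Hb : b \in th t by rewrite inE bt hb.
have C : 3 <= #|tl t| + #|th t| by rewrite card_tlth card_t.
have Hf := PF_fverts (@pe V) Ha Hb C.
have FS : PF (@pe V) (tl t) (th t) \in S.
  rewrite -SF_PF; apply: imset_f; rewrite inE tK /= SF_PF.
  by case/bigcupP: Hf => E EP _; apply/set0Pn; exists E.
by apply/bigcupP; exists (PF (@pe V) (tl t) (th t)).
Qed.

Lemma prism_tri u : #|Bs| = 2 -> #|As| = 3 -> u \in Bs -> PF (@pe V) [set u] As \in S.
Proof.
move=> m2 n3 Bu.
have [u' Bu' nu] : exists2 u', u' \in Bs & u' != u.
  have : 1 < #|Bs| by rewrite m2.
  case/card_gt1P => c [d [Hc Hd ncd]].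
  by case: (eqVneq c u) => [Eca|]; [exists d => //; rewrite -Eca eq_sym | exists c].
have : 1 < #|As| by rewrite n3.
case/card_gt1P => v1 [v2 [A1 A2 nv]].
have nu' : u != u' by rewrite eq_sym.
have QS := quad Bu Bu' A1 A2 nu' nv.
have sx : [set u; u'] \subset Bs by apply/subsetP=> w /set2P[] ->.
have sy : [set v1; v2] \subset As by apply/subsetP=> w /set2P[] ->.
have EQ : [set pe u v1; pe u v2] \in PF (@pe V) [set u; u'] [set v1; v2].
  by rewrite Bedge_in ?(Bs_lo Bu) ?(As_hi A1) ?(As_hi A2) // !inE !eqxx ?orbT.
have Ee : [set pe u v1; pe u v2] \in edges S by apply/bigcupP; exists (PF (@pe V) [set u; u'] [set v1; v2]).
have H2 := two_faces Ee.
rewrite (cardsD1 (PF (@pe V) [set u; u'] [set v1; v2])) inE QS EQ /= add1n in H2.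
have H1 : #|[set F in S | [set pe u v1; pe u v2] \in F] :\ PF (@pe V) [set u; u'] [set v1; v2]| == 1.
  by case: H2 => ->.
case/cards1P: H1 => F HF.
have : F \in [set F in S | [set pe u v1; pe u v2] \in F] :\ PF (@pe V) [set u; u'] [set v1; v2].
  by rewrite HF inE.
rewrite !inE => /andP[nFQ /andP[FS EF]].
case: (S_shape FS) => X [Y [EFe sX sY Xn [Yn C]]].
rewrite EFe Bedge_in ?(Bs_lo Bu) ?(As_hi A1) ?(As_hi A2) // in EF.
case/and3P: EF => uX y1 y2.
have cX := subset_leq_card sX; have cY := subset_leq_card sY.
have X0 : 0 < #|X| by rewrite card_gt0.
case: (eqVneq #|X| 1) => [X1|X2].
  move/eqP: X1 => /cards1P[w Xw]; rewrite Xw inE in uX; rewrite -(eqP uX) in Xw.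
  have eY : #|As| <= #|Y| by rewrite Xw cards1 in C; rewrite n3; clear -C; lia.
  by rewrite EFe Xw (sub_card_eq sY eY) in FS.
have eX : #|Bs| <= #|X| by rewrite m2; clear -cX X0 X2 m2; lia.
have eB : #|Bs| <= #|[set u; u']| by rewrite cards2 eq_sym nu m2.
have eY : #|Y| <= #|[set v1; v2]|.
  by rewrite cards2 nv; clear -C cX m2 eX; lia.
have sy' : [set v1; v2] \subset Y by apply/subsetP=> w /set2P[] ->.
move: nFQ; rewrite EFe (sub_card_eq sX eX) -(sub_card_eq sx eB) -(sub_card_eq sy' eY).
by rewrite eqxx.
Qed.

Section Tetra.
Variable u : V.
Hypothesis Bsu : Bs = [set u].
Local Notation L := (vlink K u).
Local Notation P := (tri_complex L).

Lemma Bu : u \in Bs.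
Proof. by rewrite Bsu inE. Qed.

Lemma Lmem t' : t' \in L -> exists t, [/\ t \in K, u \in t & t' = t :\ u].
Proof. by case/imsetP=> t; rewrite inE => /andP[tK ut] ->; exists t. Qed.

Lemma Lmem2 t : t \in K -> u \in t -> t :\ u \in L.
Proof. by move=> tK ut; apply: imset_f; rewrite inE tK ut. Qed.

Lemma card_tu t : t \in K -> u \in t -> #|t :\ u| = 3.
Proof. by move=> tK ut; move: (card_t tK); rewrite (cardsD1 u) ut => -[]. Qed.

Lemma step t a b : t \in K -> u \in t -> a \in t :\ u -> b \in t :\ u -> a \in As -> b \in As.
Proof.
move=> tK ut /setD1P[_ at1] /setD1P[nbu bt] Aa.
have ha := As_hi Aa; have lu := Bs_lo Bu.
case/orP: (lohi b) => lb.
  have Hv := tK_vert tK bt at1 lb ha.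
  have : b \in Bs by rewrite inE; apply/existsP; exists a; rewrite Hv lb ha.
  by rewrite Bsu inE (negbTE nbu).
have Hv := tK_vert tK ut bt lu lb.
by rewrite inE; apply/existsP; exists u; rewrite Hv lu lb.
Qed.

Lemma tu_vertsP t : t \in K -> u \in t -> t :\ u \subset verts P.
Proof.
move=> tK ut; apply/subsetP=> w wt.
apply/bigcupP; exists (tf (t :\ u)); first by rewrite tri_complexE; apply: imset_f; apply: Lmem2.
by rewrite tf_fverts // card_tu.
Qed.

Lemma edgeP e : e \in edges P -> exists t, [/\ t \in K, u \in t & e \subset t :\ u].
Proof.
case/bigcupP=> F; rewrite tri_complexE => /imsetP[t' /Lmem[t [tK ut ->]] ->].
by rewrite tf_draws inE => /andP[se _]; exists t.
Qed.

Lemma As_verts : As \subset verts P.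
Proof.
apply/subsetP=> v Av.
have := complete Bu Av; case/bigcupP=> F FS Fv.
case: (S_faceP FS) => t [tK EF _ _]; rewrite EF in Fv.
case: (memPF_fv (@tl_lo t) (@th_hi t) (Bs_lo Bu) (As_hi Av) Fv) => ut vt.
rewrite !inE in ut vt; case/andP: ut => ut _; case/andP: vt => vt _.
apply: (subsetP (tu_vertsP tK ut)).
by rewrite !inE vt andbT eq_sym; apply: lohi_neq (Bs_lo Bu) (As_hi Av).
Qed.

Lemma sph : comb_2sphere L.
Proof.
have [v Av] : exists v, v \in As.
  have := mn5; rewrite Bsu cards1 => H.
  by apply/set0Pn; rewrite -card_gt0; clear -H; lia.
have := complete Bu Av; case/bigcupP=> F FS Fv.
case: (S_faceP FS) => t [tK EF _ _]; rewrite EF in Fv.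
case: (memPF_fv (@tl_lo t) (@th_hi t) (Bs_lo Bu) (As_hi Av) Fv) => ut _.
rewrite !inE in ut; case/andP: ut => ut _.
by case: HK => _ _ H; apply: (H u t).
Qed.

Lemma verts_As : verts P = As.
Proof.
apply/eqP; rewrite eqEsubset As_verts andbT.
have [_ surf _] := sph; case: surf => _ [_ _ _ _ conn].
have cl : closed (fun a b => [&& a \in verts P, b \in verts P & [set a; b] \in edges P]) As.
  move=> a b /and3P[_ _ Eab]; case: (edgeP Eab) => t [tK ut se].
  have ha : a \in t :\ u by apply: (subsetP se); rewrite !inE eqxx.
  have hb : b \in t :\ u by apply: (subsetP se); rewrite !inE eqxx orbT.
  by apply/idP/idP => H; [apply: (step tK ut ha hb) | apply: (step tK ut hb ha)].
have [v Av] : exists v, v \in As.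
  have := mn5; rewrite Bsu cards1 => H.
  by apply/set0Pn; rewrite -card_gt0; clear -H; lia.
apply/subsetP=> w Hw.
have Hv := subsetP As_verts v Av.
by rewrite -(closed_connect cl (conn v w Hv Hw)).
Qed.

Lemma tu_As t : t \in K -> u \in t -> t :\ u \subset As.
Proof. by rewrite -verts_As; exact: tu_vertsP. Qed.

Lemma edges_P : edges P = [set e : {set V} | e \subset As & #|e| == 2].
Proof.
apply/setP=> e; apply/idP/idP.
  move=> He; case: (edgeP He) => t [tK ut se].
  rewrite inE (subset_trans se (tu_As tK ut)) /=.
  case/bigcupP: He => F; rewrite tri_complexE => /imsetP[t' _ ->].
  by rewrite tf_draws inE => /andP[].
rewrite inE => /andP[se /cards2P[a [b [nab Ee]]]].
have Aa : a \in As by apply: (subsetP se); rewrite Ee !inE eqxx.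
have Ab : b \in As by apply: (subsetP se); rewrite Ee !inE eqxx orbT.
case: (Hwn (complete Bu Aa) (complete Bu Ab)) => F FS /andP[F1 F2].
case: (S_faceP FS) => t [tK EF _ _]; rewrite EF in F1 F2.
case: (memPF_fv (@tl_lo t) (@th_hi t) (Bs_lo Bu) (As_hi Aa) F1) => ut at1.
case: (memPF_fv (@tl_lo t) (@th_hi t) (Bs_lo Bu) (As_hi Ab) F2) => _ bt.
rewrite !inE in ut at1 bt.
case/andP: ut => ut _; case/andP: at1 => at1 _; case/andP: bt => bt _.
apply/bigcupP; exists (tf (t :\ u)); first by rewrite tri_complexE; apply: imset_f; apply: Lmem2.
rewrite tf_draws inE Ee cards2 nab andbT.
apply/subsetP=> w /set2P[] ->; rewrite !inE ?at1 ?bt andbT.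
  by rewrite eq_sym; apply: lohi_neq (Bs_lo Bu) (As_hi Aa).
by rewrite eq_sym; apply: lohi_neq (Bs_lo Bu) (As_hi Ab).
Qed.

Lemma card_P_L : #|P| = #|L|.
Proof.
rewrite tri_complexE; apply: card_in_imset => t1 t2 H1 H2 E.
have [c1 _ _] := sph.
by rewrite -(tf_fverts (_ : 2 <= #|t1|)) ?c1 // E tf_fverts ?c1.
Qed.

Lemma dc : #|P| * 3 = #|edges P| * 2.
Proof.
have [c1 surf _] := sph; case: surf => _ [_ _ two _ _].
rewrite -!sum_nat_const.
transitivity (\sum_(F in P) #|F|).
  apply: eq_bigr => F; rewrite tri_complexE => /imsetP[t' Ht' ->].
  by rewrite tf_card // c1.
rewrite double_count; apply: eq_bigr => e He; exact: two.
Qed.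

Lemma n4 : #|As| = 4.
Proof.
have [_ _ eul] := sph.
rewrite verts_As edges_P cards_draws in eul.
have := dc; rewrite edges_P cards_draws card_P_L => dc'.
have b2 := mul_bin_diag #|As| 1; rewrite bin1 in b2.
have := mn5; rewrite Bsu cards1 => H5.
move: eul dc' b2 H5; set n := #|As|; set c := 'C(n, 2); set l := #|L|.
clear; nia.
Qed.

Lemma tl_t t : t \in K -> u \in t -> tl t = [set u].
Proof.
move=> tK ut; apply/setP=> w; rewrite !inE.
case: (eqVneq w u) => [->|nwu]; first by rewrite ut (Bs_lo Bu).
case: (boolP (w \in t)) => //= wt.
have : w \in As by apply: (subsetP (tu_As tK ut)); rewrite !inE nwu.
by move/As_hi; rewrite hi_nlo => /negbTE.
Qed.

Lemma th_t t : t \in K -> u \in t -> th t = t :\ u.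
Proof.
move=> tK ut; apply/setP=> w; rewrite !inE.
case: (eqVneq w u) => [->|nwu] /=.
  by rewrite hi_nlo (Bs_lo Bu) andbF.
case: (boolP (w \in t)) => //= wt.
by apply: As_hi; apply: (subsetP (tu_As tK ut)); rewrite !inE nwu.
Qed.

Lemma L_to_S t' : t' \in L -> PF (@pe V) [set u] t' \in S.
Proof.
case/Lmem=> t [tK ut ->].
rewrite -(th_t tK ut) -(tl_t tK ut) -SF_PF; apply: imset_f.
rewrite inE tK /= SF_PF (tl_t tK ut) (th_t tK ut).
have : 1 < #|t :\ u| by rewrite card_tu.
case/card_gt1P=> a [b [Ha Hb nab]].
by apply/set0Pn; exists [set pe u a; pe u b]; apply: PF_mem; rewrite ?in_set1 ?eqxx.
Qed.

Lemma all_tri Y : Y \subset As -> #|Y| = 3 -> PF (@pe V) Bs Y \in S.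
Proof.
move=> sY cY3.
set Z := [set Y : {set V} | Y \subset As & #|Y| == 3].
set img := [set PF (@pe V) [set u] Y' | Y' in Z].
have Simg : S \subset img.
  apply/subsetP=> F FS; case: (S_shape FS) => X [Y' [EF sX sY' Xn [Yn C]]].
  have EX : X = [set u].
    by apply/eqP; rewrite eqEcard -Bsu sX /= Bsu cards1 card_gt0.
  rewrite EF EX; apply: imset_f; rewrite inE sY' /=.
  by rewrite EX cards1 in C; apply/eqP; clear -C; lia.
have cimg : #|img| <= 4.
  by apply: leq_trans (leq_imset_card _ _) _; rewrite cards_draws n4.
have cL : #|L| <= #|S|.
  rewrite -(@card_in_imset _ _ (fun t' => PF (@pe V) [set u] t')); last first.
    move=> t1 t2 H1 H2 /= E.
    case: (Lmem H1) => s1 [sK us E1]; case: (Lmem H2) => s2 [sK' us' E2]; subst t1 t2.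
    have sx : {subset [set u] <= [pred a | lo a]} by move=> a; rewrite inE => /eqP ->; apply: Bs_lo Bu.
    have s1h : {subset s1 :\ u <= [pred a | hi a]} by move=> a /(subsetP (tu_As sK us)) /As_hi.
    have s2h : {subset s2 :\ u <= [pred a | hi a]} by move=> a /(subsetP (tu_As sK' us')) /As_hi.
    have n1 : [set u] != set0 by apply/set0Pn; exists u; rewrite inE.
    have n2 : s1 :\ u != set0 by rewrite -card_gt0 card_tu.
    have n3 : s2 :\ u != set0 by rewrite -card_gt0 card_tu.
    have c2 : 3 <= #|[set u]| + #|s1 :\ u| by rewrite cards1 card_tu.
    have c3 : 3 <= #|[set u]| + #|s2 :\ u| by rewrite cards1 card_tu.
    by case: (PF_inj sx s1h sx s2h n1 n2 c2 n1 n3 c3 E).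
  apply: subset_leq_card; apply/subsetP=> F /imsetP[t' Ht' ->]; exact: L_to_S.
have cL4 : #|L| = 4.
  have b6 : 'C(4, 2) = 6 by [].
  have := dc; rewrite edges_P cards_draws n4 card_P_L b6.
  by move=> H; clear -H; lia.
have ES : S = img by apply: sub_card_eq Simg _; apply: leq_trans cimg _; rewrite -cL4.
rewrite ES Bsu; apply: imset_f; by rewrite inE sY cY3 eqxx.
Qed.

End Tetra.

Lemma pick_lo u v : lo u -> hi v -> [pick w in pe u v | lo w] = Some u.
Proof.
move=> lu hv; case: pickP => [w|H].
  rewrite !inE => /andP[/orP[] /eqP -> lw] //.
  by case: (lohiF lw hv).
by move: (H u); rewrite !inE eqxx lu.
Qed.

Lemma pick_hi u v : lo u -> hi v -> [pick w in pe u v | hi w] = Some v.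
Proof.
move=> lu hv; case: pickP => [w|H].
  rewrite !inE => /andP[/orP[] /eqP -> hw] //.
  by case: (lohiF lu hw).
by move: (H v); rewrite !inE eqxx hv orbT.
Qed.

Lemma iso_gen (W' : finType) p q (h' : 'I_p.+1 -> 'I_q.+1 -> W')
  (Q : {set {set {set W'}}}) (D' : {set 'I_p.+1} -> {set 'I_q.+1} -> bool) :
  #|Bs| = p.+1 -> #|As| = q.+1 ->
  (forall a b a' b', h' a b = h' a' b' -> a = a' /\ b = b') ->
  (forall X Y, X \subset Bs -> Y \subset As ->
     (PF (@pe V) X Y \in S) = D' (gI p Bs @: X) (gI q As @: Y)) ->
  (forall G, G \in Q <-> exists Xo Yo, D' Xo Yo /\ G = PF h' Xo Yo) ->
  comb_iso S Q.
Proof.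
move=> cB cA hinj HD HQ.
pose gB := gI p Bs; pose gA := gI q As.
pose phi := fun e : {set V} =>
  h' (oapp gB ord0 [pick w in e | lo w]) (oapp gA ord0 [pick w in e | hi w]).
have phiE : forall a b, lo a -> hi b -> phi (pe a b) = h' (gB a) (gA b).
  by move=> a b la hb; rewrite /phi pick_lo // pick_hi.
have imgE : forall X Y, X \subset Bs -> Y \subset As ->
    [set phi @: e | e : {set {set V}} in PF (@pe V) X Y] = PF h' (gB @: X) (gA @: Y).
  move=> X Y sX sY; rewrite PF_image.
  rewrite (@PF_ext _ _ _ _ (fun a b => h' (gB a) (gA b))); last first.
    by move=> a b Ha Hb; exact: phiE _ _ (sub_lo sX Ha) (sub_hi sY Hb).
  rewrite PF_reindex //.
    by move=> a b Ha Hb E; apply: (gI_inj cB) => //; apply: (subsetP sX).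
  by move=> a b Ha Hb E; apply: (gI_inj cA) => //; apply: (subsetP sY).
exists phi; split.
  move=> e1 e2 /verts_SP[a1 [b1 [-> A1 B1]]] /verts_SP[a2 [b2 [-> A2 B2]]].
  rewrite (phiE _ _ (Bs_lo A1) (As_hi B1)) (phiE _ _ (Bs_lo A2) (As_hi B2)).
  by case/hinj => E1 E2; rewrite (gI_inj cB A1 A2 E1) (gI_inj cA B1 B2 E2).
apply/setP=> G; apply/imsetP/idP.
  case=> F FS ->; case: (S_shape FS) => X [Y [EF sX sY _ _]].
  rewrite EF imgE //; apply/HQ; exists (gB @: X), (gA @: Y); split=> //.
  by rewrite -HD // -EF.
case/HQ=> Xo [Yo [HD' ->]].
pose X := [set w in Bs | gB w \in Xo]; pose Y := [set w in As | gA w \in Yo].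
have sX : X \subset Bs by apply/subsetP=> w; rewrite inE => /andP[].
have sY : Y \subset As by apply/subsetP=> w; rewrite inE => /andP[].
have eX : gB @: X = Xo by apply: gI_img.
have eY : gA @: Y = Yo by apply: gI_img.
exists (PF (@pe V) X Y); first by rewrite HD // eX eY.
by rewrite imgE // eX eY.
Qed.

End Slice.

Lemma ordE n (i : 'I_n.+1) k : k <= n -> (i == inord k) = (val i == k).
Proof. by move=> H; rewrite -val_eqE /= inordK. Qed.

Lemma oE n a b : a <= n -> b <= n -> ((inord a : 'I_n.+1) == inord b) = (a == b).
Proof. by move=> Ha Hb; rewrite -val_eqE /= !inordK. Qed.

Lemma card3 (T : finType) (a b c : T) : a != b -> b != c -> a != c -> #|[set a; b; c]| = 3.
Proof.
move=> ab bc ac.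
have -> : [set a; b; c] = a |: [set b; c] by apply/setP=> z; rewrite !inE orbA.
by rewrite cardsU1 cards2 !inE (negbTE ab) (negbTE ac) bc.
Qed.

Lemma card1_I1 (X : {set 'I_1}) : #|X| = 1 -> X = [set ord0].
Proof.
move/eqP/cards1P=> [a ->]; congr [set _]; exact: ord1.
Qed.

Lemma cardC1_sub n (Y : {set 'I_n.+1}) : #|Y| = n -> exists k, Y = ~: [set k].
Proof.
move=> cY; have : #|~: Y| == 1.
  by have := cardsC Y; rewrite card_ord cY => H; apply/eqP; clear -H; lia.
by case/cards1P=> k Hk; exists k; rewrite -Hk setCK.
Qed.

Definition hT (a : 'I_1) (b : 'I_4) : 'I_4 := b.

Lemma hT_inj a b a' b' : hT a b = hT a' b' -> a = a' /\ b = b'.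
Proof. by rewrite /hT => ->; split => //; rewrite (ord1 a) (ord1 a'). Qed.

Lemma tri_face_T (a b c : 'I_4) : a != b -> b != c -> a != c ->
  cycle_face [:: a; b; c] = PF hT [set ord0] [set a; b; c].
Proof. by move=> ab bc ac; rewrite PF_tri. Qed.

Lemma tetraQ G : G \in tetra_boundary <->
  exists (X : {set 'I_1}) (Y : {set 'I_4}), ((#|X| == 1) && (#|Y| == 3)) /\ G = PF hT X Y.
Proof.
rewrite inE /=; split.
  rewrite !inE; move=> H; exists [set ord0].
  have c1 : #|[set (ord0 : 'I_1)]| == 1 by rewrite cards1.
  repeat case/orP: H => H; move/eqP: H => ->;
   [exists [set o4 0; o4 1; o4 2] | exists [set o4 0; o4 1; o4 3]
   | exists [set o4 0; o4 2; o4 3] | exists [set o4 1; o4 2; o4 3]];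
   rewrite c1 card3 ?tri_face_T //= /o4 ?oE //.
case=> X [Y [/andP[/eqP cX /eqP cY] ->]].
rewrite (card1_I1 cX); case: (cardC1_sub cY) => k ->.
have E : forall a b c : 'I_4, a != b -> b != c -> a != c -> ~: [set k] = [set a; b; c] ->
    PF hT [set ord0] (~: [set k]) = cycle_face [:: a; b; c].
  by move=> a b c ab bc ac ->; rewrite tri_face_T.
rewrite !inE.
move: E; case: k => [[|[|[|[|?]]]] Hk] // E.
- rewrite (@E (o4 1) (o4 2) (o4 3)) ?eqxx ?orbT // /o4 ?oE //.
  by apply/setP=> i; rewrite !inE !ordE //; case: i => [[|[|[|[|?]]]] Hi].
- rewrite (@E (o4 0) (o4 2) (o4 3)) ?eqxx ?orbT // /o4 ?oE //.
  by apply/setP=> i; rewrite !inE !ordE //; case: i => [[|[|[|[|?]]]] Hi].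
- rewrite (@E (o4 0) (o4 1) (o4 3)) ?eqxx ?orbT // /o4 ?oE //.
  by apply/setP=> i; rewrite !inE !ordE //; case: i => [[|[|[|[|?]]]] Hi].
- rewrite (@E (o4 0) (o4 1) (o4 2)) ?eqxx ?orbT // /o4 ?oE //.
  by apply/setP=> i; rewrite !inE !ordE //; case: i => [[|[|[|[|?]]]] Hi].
Qed.

Ltac pick_eq := repeat (apply/orP; first [ (left; apply/eqP; done) | right ]); try (apply/eqP; done).

Definition hP (r : 'I_2) (c : 'I_3) : 'I_6 := o6 (3 * r + c).

Lemma hP_val r c : nat_of_ord (hP r c) = 3 * r + c.
Proof.
rewrite /hP /o6 inordK //.
have := ltn_ord r; have := ltn_ord c; clear; lia.
Qed.

Lemma hP_inj a b a' b' : hP a b = hP a' b' -> a = a' /\ b = b'.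
Proof.
move=> E; have := congr1 (@nat_of_ord _) E; rewrite !hP_val => E'.
have := ltn_ord a; have := ltn_ord b; have := ltn_ord a'; have := ltn_ord b'.
move=> h1 h2 h3 h4.
have ea : nat_of_ord a = nat_of_ord a' by clear -E' h1 h2 h3 h4; lia.
have eb : nat_of_ord b = nat_of_ord b' by clear -E' h1 h2 h3 h4; lia.
by split; apply: val_inj.
Qed.

Definition c0 : 'I_3 := Ordinal (isT : 0 < 3).
Definition c1 : 'I_3 := Ordinal (isT : 1 < 3).
Definition c2 : 'I_3 := Ordinal (isT : 2 < 3).
Definition r0 : 'I_2 := Ordinal (isT : 0 < 2).
Definition r1 : 'I_2 := Ordinal (isT : 1 < 2).

Lemma setT3 : [set: 'I_3] = [set c0; c1; c2].
Proof. by apply/setP=> i; rewrite !inE; case: i => [[|[|[|?]]] Hi]. Qed.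
Lemma setT2 : [set: 'I_2] = [set r0; r1].
Proof. by apply/setP=> i; rewrite !inE; case: i => [[|[|?]] Hi]. Qed.

Lemma prism_faces :
  [/\ cycle_face [:: o6 0; o6 1; o6 2] = PF hP [set r0] setT,
      cycle_face [:: o6 3; o6 4; o6 5] = PF hP [set r1] setT,
      cycle_face [:: o6 0; o6 1; o6 4; o6 3] = PF hP setT (~: [set c2]),
      cycle_face [:: o6 1; o6 2; o6 5; o6 4] = PF hP setT (~: [set c0]) &
      cycle_face [:: o6 2; o6 0; o6 3; o6 5] = PF hP setT (~: [set c1])].
Proof.
have C2 : ~: [set c2] = [set c0; c1].
  by apply/setP=> i; rewrite !inE; case: i => [[|[|[|?]]] Hi].
have C0 : ~: [set c0] = [set c1; c2].
  by apply/setP=> i; rewrite !inE; case: i => [[|[|[|?]]] Hi].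
have C1 : ~: [set c1] = [set c2; c0].
  by apply/setP=> i; rewrite !inE; case: i => [[|[|[|?]]] Hi].
by rewrite setT3 setT2 C0 C1 C2 !PF_tri ?PF_quad.
Qed.

Lemma prismQ G : G \in prism_boundary <->
  exists (X : {set 'I_2}) (Y : {set 'I_3}),
    ((#|X| == 1) && (#|Y| == 3) || (#|X| == 2) && (#|Y| == 2)) /\ G = PF hP X Y.
Proof.
have [F1 F2 F3 F4 F5] := prism_faces.
have cT3 : #|[set: 'I_3]| = 3 by rewrite cardsT card_ord.
have cT2 : #|[set: 'I_2]| = 2 by rewrite cardsT card_ord.
have cC : forall c : 'I_3, #|~: [set c]| = 2 by move=> c; rewrite cardsC1 card_ord.
rewrite inE /= !inE; split.
  move=> H; repeat case/orP: H => H; move/eqP: H => ->.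
  - by exists [set r0], setT; rewrite F1 cards1 cT3.
  - by exists [set r1], setT; rewrite F2 cards1 cT3.
  - by exists setT, (~: [set c2]); rewrite F3 cT2 cC orbT.
  - by exists setT, (~: [set c0]); rewrite F4 cT2 cC orbT.
  - by exists setT, (~: [set c1]); rewrite F5 cT2 cC orbT.
case=> X [Y [H ->]].
case/orP: H => /andP[/eqP cX /eqP cY].
  have EY : Y = setT by apply/eqP; rewrite eqEcard subsetT cT3 cY.
  move/eqP/cards1P: cX => [r ->]; rewrite EY.
  case: r => [[|[|?]] Hr] //.
  - rewrite (_ : Ordinal Hr = r0); last exact: val_inj.
    by rewrite F1 F2 F3 F4 F5; pick_eq.
  - rewrite (_ : Ordinal Hr = r1); last exact: val_inj.
    by rewrite F1 F2 F3 F4 F5; pick_eq.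
have EX : X = setT by apply/eqP; rewrite eqEcard subsetT cT2 cX.
case: (cardC1_sub cY) => k ->; rewrite EX.
case: k => [[|[|[|?]]] Hk] //.
- rewrite (_ : Ordinal Hk = c0); last exact: val_inj.
  by rewrite F1 F2 F3 F4 F5; pick_eq.
- rewrite (_ : Ordinal Hk = c1); last exact: val_inj.
  by rewrite F1 F2 F3 F4 F5; pick_eq.
- rewrite (_ : Ordinal Hk = c2); last exact: val_inj.
  by rewrite F1 F2 F3 F4 F5; pick_eq.
Qed.

Lemma ordS_neq (i : 'I_3) : i != ordS i.
Proof. by case: i => [[|[|[|?]]] Hi]; rewrite -val_eqE. Qed.

Lemma sub2_3 (X : {set 'I_3}) : #|X| = 2 -> exists i, X = [set i; ordS i].
Proof.
move=> cX; case: (cardC1_sub cX) => k ->.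
exists (ordS k); apply/setP=> i; rewrite !inE.
case: k => [[|[|[|?]]] Hk] //; case: i => [[|[|[|?]]] Hi] //; rewrite -!val_eqE //.
Qed.

Lemma torus_face (i j : 'I_3) :
  cycle_face [:: (i, j); (ordS i, j); (ordS i, ordS j); (i, ordS j)] =
  PF pair [set i; ordS i] [set j; ordS j].
Proof. by rewrite cycle4_rev PF_quad ?ordS_neq. Qed.

Lemma pair_inj (a : 'I_3) (b : 'I_3) a' b' : (a, b) = (a', b') -> a = a' /\ b = b'.
Proof. by case=> -> ->. Qed.

Lemma torusQ G : G \in grid_torus <->
  exists (X : {set 'I_3}) (Y : {set 'I_3}), ((#|X| == 2) && (#|Y| == 2)) /\ G = PF pair X Y.
Proof.
split.
  case/imset2P=> i j _ _ ->; exists [set i; ordS i], [set j; ordS j].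
  by rewrite !cards2 !ordS_neq torus_face.
case=> X [Y [/andP[/eqP cX /eqP cY] ->]].
case: (sub2_3 cX) => i ->; case: (sub2_3 cY) => j ->.
by rewrite -torus_face; apply/imset2P; exists i j.
Qed.

Section Neg.
Variables (R : realType) (V : finType) (K : {set {set V}}) (f : V -> R) (x : R).

Lemma crossing_neg : crossing (fun v => (- f v)%R) (- x)%R = crossing f x.
Proof.
apply: functional_extensionality => e; apply/existsP/existsP.
  case=> u /existsP[v /andP[/eqP -> /andP[h1 h2]]].
  rewrite ltrN2 in h1; rewrite ltrN2 in h2.
  by exists v; apply/existsP; exists u; rewrite set2C' eqxx h1 h2.
case=> u /existsP[v /andP[/eqP -> /andP[h1 h2]]].
exists v; apply/existsP; exists u; rewrite set2C' eqxx !ltrN2.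
by rewrite h1 h2.
Qed.

Lemma slicing_neg : slicing K (fun v => (- f v)%R) (- x)%R = slicing K f x.
Proof. by rewrite /slicing /slice_face crossing_neg. Qed.

Lemma Bs_neg : Bs K (fun v => (- f v)%R) (- x)%R = As K f x.
Proof.
rewrite /Bs /As slicing_neg; apply/setP=> w; rewrite !inE.
apply/existsP/existsP=> -[v /and3P[H1 H2 H3]]; exists v;
  rewrite /pe set2C' in H1; rewrite /pe H1 /= ?ltrN2;
  rewrite ?ltrN2 in H2 H3; by rewrite H2 H3.
Qed.

Lemma As_neg : As K (fun v => (- f v)%R) (- x)%R = Bs K f x.
Proof.
rewrite /Bs /As slicing_neg; apply/setP=> w; rewrite !inE.
apply/existsP/existsP=> -[v /and3P[H1 H2 H3]]; exists v;
  rewrite /pe set2C' in H1; rewrite /pe H1 /= ?ltrN2;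
  rewrite ?ltrN2 in H2 H3; by rewrite H2 H3.
Qed.

End Neg.

Lemma gI_card (V : finType) p (Z X : {set V}) : #|Z| = p.+1 -> X \subset Z ->
  #|gI p Z @: X| = #|X|.
Proof.
move=> cZ sX; apply: card_in_imset => a b Ha Hb.
by apply: (gI_inj cZ); apply: (subsetP sX).
Qed.

Lemma card_le_sub (T : finType) (X B : {set T}) : X \subset B -> #|X| <= #|B|.
Proof. exact: subset_leq_card. Qed.

Section Main.
Variables (R : realType) (V : finType) (K : {set {set V}}) (f : V -> R) (x : R).
Hypotheses (HK : comb_3manifold K) (Hx : forall v, f v != x)
  (Hpm : polyhedral_map (slicing K f x)) (Hwn : weakly_neighborly (slicing K f x)).
Local Notation S := (slicing K f x).
Local Notation B := (Bs K f x).
Local Notation A := (As K f x).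
Local Notation f' := (fun v => (- f v)%R).
Local Notation x' := (- x)%R.

Lemma Hx' : forall v, f' v != x'.
Proof. by move=> v; rewrite eqr_opp. Qed.
Lemma Hpm' : polyhedral_map (slicing K f' x').
Proof. by rewrite slicing_neg. Qed.
Lemma Hwn' : weakly_neighborly (slicing K f' x').
Proof. by rewrite slicing_neg. Qed.

Lemma symA_le2 v w1 w2 : v \in A -> w1 \in B -> w2 \in B -> w1 != w2 -> #|A :\ v| <= 2.
Proof.
move=> Av B1 B2 nw.
have := @Bedge_le2 _ _ K f' x' Hx' HK Hpm' Hwn' v w1 w2.
by rewrite Bs_neg As_neg; apply.
Qed.

Lemma PF_pe_sym (X Y : {set V}) : PF (@pe V) X Y = PF (@pe V) Y X.
Proof.
rewrite PF_sym; apply: PF_ext => a b _ _; exact: set2C'.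
Qed.

Lemma symA_tri v w1 w2 (X : {set V}) : v \in A -> w1 \in B -> w2 \in B -> w1 != w2 ->
  X \subset B -> PF (@pe V) X [set v] \in S -> w1 \in X -> w2 \in X -> #|A :\ v| <= 1.
Proof.
move=> Av B1 B2 nw sX FS x1 x2.
have := @Bedge_tri _ _ K f' x' Hx' HK Hpm' Hwn' v w1 w2.
rewrite Bs_neg As_neg slicing_neg PF_pe_sym in FS *.
by move=> H; apply: (H _ _ _ _ X).
Qed.

Definition concl := comb_iso S tetra_boundary \/ comb_iso S prism_boundary \/
  comb_iso S grid_torus.

Lemma main_le : #|B| <= #|A| -> concl.
Proof.
move=> Hle.
have H5 := mn5 Hx HK Hpm.
have m1 : 0 < #|B|.
  case/set0Pn: (S_neq0 Hpm) => F FS.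
  case: (S_shape Hx HK FS) => X [Y [_ sX _ Xn _]].
  by rewrite card_gt0; apply/set0Pn; case/set0Pn: Xn => a Ha; exists a; apply: (subsetP sX).
have : #|B| = 1 \/ #|B| = 2 \/ #|B| = 3 \/ 4 <= #|B| by clear -m1; lia.
case=> [mB|[mB|[mB|mB]]].
-
  have [u Bsu] : exists u, B = [set u] by apply/cards1P; rewrite mB.
  have nA := n4 Hx HK Hpm Hwn Bsu.
  left.
  apply: (@iso_gen _ _ K f x Hx HK _ 0 3 hT _ (fun X Y => (#|X| == 1) && (#|Y| == 3)))
    => //; first exact: hT_inj; last exact: tetraQ.
  move=> X Y sX sY; rewrite !gI_card //.
  apply/idP/idP.
    move=> FS; case: (shape_of Hx HK sX sY FS) => Xn Yn C.
    have cX := card_le_sub sX; rewrite mB in cX.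
    have cX0 : 0 < #|X| by rewrite card_gt0.
    by apply/andP; split; apply/eqP; clear -C cX cX0; lia.
  case/andP=> /eqP cX /eqP cY.
  rewrite (@sub_card_eq _ X B sX); last by rewrite mB cX.
  exact: (all_tri Hx HK Hpm Hwn Bsu sY cY).
-
  have [w1 [w2 [B1 B2 nw]]] : exists w1 w2, [/\ w1 \in B, w2 \in B & w1 != w2].
    by apply/card_gt1P; rewrite mB.
  have [v Av] : exists v, v \in A by apply/set0Pn; rewrite -card_gt0; clear -Hle mB; lia.
  have nA' := symA_le2 Av B1 B2 nw.
  have eA := cardsD1 v A; rewrite Av /= in eA.
  have nA : #|A| = 3 by clear -nA' H5 mB eA; lia.
  right; left.
  apply: (@iso_gen _ _ K f x Hx HK _ 1 2 hP _
    (fun X Y => ((#|X| == 1) && (#|Y| == 3)) || ((#|X| == 2) && (#|Y| == 2))))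
    => //; first exact: hP_inj; last exact: prismQ.
  move=> X Y sX sY; rewrite !gI_card //.
  apply/idP/idP.
    move=> FS; case: (shape_of Hx HK sX sY FS) => Xn Yn C.
    have cX := card_le_sub sX; rewrite mB in cX.
    have cY := card_le_sub sY; rewrite nA in cY.
    have cX0 : 0 < #|X| by rewrite card_gt0.
    have cY0 : 0 < #|Y| by rewrite card_gt0.
    have : #|X| = 1 \/ #|X| = 2 by clear -cX cX0; lia.
    by case=> E; rewrite E eqxx /= ?orbT; apply/eqP; clear -C E; lia.
  case/orP=> /andP[/eqP cX /eqP cY].
    move/eqP/cards1P: cX => [u Xu]; rewrite Xu.
    have Bu : u \in B by apply: (subsetP sX); rewrite Xu inE.
    rewrite (@sub_card_eq _ Y A sY); last by rewrite nA cY.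
    exact: (prism_tri Hx HK Hpm Hwn mB nA Bu).
  move/eqP/cards2P: cX => [u1 [u2 [nu Xu]]].
  move/eqP/cards2P: cY => [v1 [v2 [nv Yv]]].
  rewrite Xu Yv; apply: (quad Hx HK Hwn) => //.
  - by apply: (subsetP sX); rewrite Xu !inE eqxx.
  - by apply: (subsetP sX); rewrite Xu !inE eqxx orbT.
  - by apply: (subsetP sY); rewrite Yv !inE eqxx.
  - by apply: (subsetP sY); rewrite Yv !inE eqxx orbT.
-
  have [w1 [w2 [B1 B2 nw]]] : exists w1 w2, [/\ w1 \in B, w2 \in B & w1 != w2].
    by apply/card_gt1P; rewrite mB.
  have [v Av] : exists v, v \in A by apply/set0Pn; rewrite -card_gt0; clear -Hle mB; lia.
  have nA' := symA_le2 Av B1 B2 nw.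
  have eA := cardsD1 v A; rewrite Av /= in eA.
  have nA : #|A| = 3 by clear -nA' Hle mB eA; lia.
  right; right.
  apply: (@iso_gen _ _ K f x Hx HK _ 2 2 pair _
    (fun X Y => (#|X| == 2) && (#|Y| == 2)))
    => //; first exact: pair_inj; last exact: torusQ.
  move=> X Y sX sY; rewrite !gI_card //.
  apply/idP/idP.
    move=> FS; case: (shape_of Hx HK sX sY FS) => Xn Yn C.
    have cX := card_le_sub sX; rewrite mB in cX.
    have cY := card_le_sub sY; rewrite nA in cY.
    have cX0 : 0 < #|X| by rewrite card_gt0.
    have cY0 : 0 < #|Y| by rewrite card_gt0.
    have nX1 : #|X| != 1.
      apply/negP=> /cards1P[u Xu].
      have Bu : u \in B by apply: (subsetP sX); rewrite Xu inE.
      have : 1 < #|Y| by rewrite Xu cards1 in C; clear -C; lia.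
      case/card_gt1P=> y1 [y2 [Y1 Y2 ny]].
      have := Bedge_tri Hx HK Hpm Hwn Bu (subsetP sY _ Y1) (subsetP sY _ Y2) ny sY.
      rewrite Xu in FS; move=> /(_ FS Y1 Y2) H.
      have eB := cardsD1 u B; rewrite Bu mB /= in eB.
      by clear -H eB; lia.
    have nY1 : #|Y| != 1.
      apply/negP=> /cards1P[v' Yv].
      have Av' : v' \in A by apply: (subsetP sY); rewrite Yv inE.
      have : 1 < #|X| by rewrite Yv cards1 in C; clear -C; lia.
      case/card_gt1P=> y1 [y2 [X1 X2 ny]].
      have := symA_tri Av' (subsetP sX _ X1) (subsetP sX _ X2) ny sX.
      rewrite Yv in FS; move=> /(_ FS X1 X2) H.
      have eA' := cardsD1 v' A; rewrite Av' nA /= in eA'.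
      by clear -H eA'; lia.
    by apply/andP; split; apply/eqP; move/eqP: nX1; move/eqP: nY1;
      clear -C cX cY cX0 cY0; lia.
  case/andP=> cX cY.
  move/cards2P: cX => [u1 [u2 [nu Xu]]].
  move/cards2P: cY => [v1 [v2 [nv Yv]]].
  rewrite Xu Yv; apply: (quad Hx HK Hwn) => //.
  - by apply: (subsetP sX); rewrite Xu !inE eqxx.
  - by apply: (subsetP sX); rewrite Xu !inE eqxx orbT.
  - by apply: (subsetP sY); rewrite Yv !inE eqxx.
  - by apply: (subsetP sY); rewrite Yv !inE eqxx orbT.
-
  have [u Bu] : exists u, u \in B by apply/set0Pn; rewrite -card_gt0; clear -mB; lia.
  have : 1 < #|A| by clear -mB Hle; lia.
  case/card_gt1P=> v1 [v2 [A1 A2 nv]].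
  have := Bedge_le2 Hx HK Hpm Hwn Bu A1 A2 nv.
  rewrite (cardsD1 u B) Bu /= in mB.
  by move=> H; clear -H mB; lia.
Qed.

End Main.

Local Open Scope ring_scope.

Theorem theorem5p5 (R : realType) (V : finType) (K : {set {set V}})
  (f : V -> R) (x : R) :
  comb_3manifold K ->
  rsl f ->
  (forall v, f v != x) ->
  polyhedral_map (slicing K f x) ->
  weakly_neighborly (slicing K f x) ->
  comb_iso (slicing K f x) tetra_boundary \/
  comb_iso (slicing K f x) prism_boundary \/
  comb_iso (slicing K f x) grid_torus.
Proof.
move=> HK _ Hx Hpm Hwn.
case: (leqP #|Bs K f x| #|As K f x|) => H.
  exact: (main_le HK Hx Hpm Hwn H).
have H' : (#|Bs K (fun v => - f v) (- x)| <= #|As K (fun v => - f v) (- x)|)%N.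
  by rewrite Bs_neg As_neg; exact: ltnW H.
have := main_le HK (Hx' Hx) (Hpm' Hpm) (Hwn' Hwn) H'.
by rewrite /concl slicing_neg.
Qed.
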